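(* Let $G$ be a group of order $80$ whose Sylow $5$-subgroups are not normal. Then every connected Cayley graph on $G$ has a hamiltonian cycle.
   Context: For a group $G$ and a subset $S \subseteq G$, the Cayley graph $\mathrm{Cay}(G;S)$ has vertex set $G$, with $g$ adjacent to $gs$ for every $g \in G$ and $s \in S \cup S^{-1}$; it is connected iff $S$ generates $G$. *)

(* Defs.v *)
From mathcomp Require Import all_boot all_fingroup all_solvable.
Set Implicit Arguments. Unset Strict Implicit. Unset Printing Implicit Defensive.
Local Open Scope group_scope.

Definition cayley_adj (gT : finGroupType) (S : {set gT}) : rel gT :=
  fun g h => (g^-1 * h \in S) || (h^-1 * g \in S).

Definition hamiltonian_cycle (T : finType) (e : rel T) (c : seq T) : bool :=
  [&& uniq c, size c == #|T| & path.cycle e c].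

Definition hamiltonian (T : finType) (e : rel T) : Prop :=
  exists c : seq T, hamiltonian_cycle e c.

(* Main.v *)
Require Import Defs.
From mathcomp Require Import all_boot all_fingroup all_solvable.
Set Implicit Arguments. Unset Strict Implicit. Unset Printing Implicit Defensive.

Definition code := (bool * bool * bool * bool * 'I_5)%type.
Definition succ5 (k : 'I_5) : 'I_5 := Ordinal (ltn_pmod k.+1 (isT : 0 < 5)).
Definition tx (c : code) : code :=
  let: (b0, b1, b2, b3, k) := c in (b0, b1, b2, b3, succ5 k).
Definition tv (c : code) : code :=
  let: (b0, b1, b2, b3, k) := c in
  match val k with
  | 0 => (~~ b0, b1, b2, b3, k)
  | 1 => (~~ b0, ~~ b1, ~~ b2, ~~ b3, k)
  | 2 => (b0, b1, b2, ~~ b3, k)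
  | 3 => (b0, b1, ~~ b2, b3, k)
  | _ => (b0, ~~ b1, b2, b3, k)
  end.
Definition ty (m : nat) (c : code) : code := iter m tx (tv c).
Definition step (m l : nat) (c : code) : code :=
  match l with
  | 0 => tx c
  | 1 => iter 4 tx c
  | 2 => ty m c
  | _ => tv (iter (5 - m) tx c)
  end.
Definition crel (m : nat) : rel code :=
  fun c d => [|| d == tx c, c == tx d, d == ty m c | c == ty m d].
Definition c0 : code := (false, false, false, false, ord0).
Definition codes (m : nat) (w : seq nat) : seq code :=
  c0 :: scanl (fun c l => step m l c) c0 w.
Definition good (m : nat) (w : seq nat) : bool :=
  [&& uniq (codes m w), size (codes m w) == 80 & path.cycle (crel m) (codes m w)].

Definition w0 : seq nat := [:: 2; 0; 2; 1; 2; 1; 1; 2; 1; 1; 1; 1; 2; 1; 1; 2; 0; 0; 2; 1; 1; 1; 1; 2; 1; 1; 2; 1; 2; 0; 0; 2; 1; 1; 1; 1; 2; 1; 1; 1; 1; 2; 0; 2; 0; 0; 0; 0; 2; 0; 0; 0; 0; 2; 0; 0; 0; 0; 2; 0; 0; 2; 1; 2; 1; 1; 1; 1; 2; 1; 1; 1; 1; 2; 1; 2; 0; 0; 0].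
Definition w1 : seq nat := [:: 3; 1; 1; 3; 1; 2; 0; 0; 2; 1; 2; 0; 3; 3; 1; 3; 0; 3; 1; 2; 1; 1; 2; 0; 0; 3; 3; 1; 2; 1; 1; 3; 3; 3; 1; 1; 3; 0; 3; 1; 3; 3; 3; 1; 1; 1; 1; 3; 3; 3; 3; 1; 1; 1; 2; 2; 2; 0; 2; 0; 3; 0; 0; 0; 3; 1; 2; 1; 3; 0; 0; 0; 0; 2; 1; 1; 2; 2; 1].
Definition w2 : seq nat := [:: 3; 0; 3; 0; 2; 1; 3; 3; 1; 1; 1; 1; 3; 0; 0; 0; 0; 2; 1; 2; 1; 2; 2; 2; 1; 3; 0; 3; 0; 2; 1; 2; 2; 2; 2; 0; 0; 2; 1; 2; 2; 2; 2; 1; 1; 2; 1; 2; 2; 1; 1; 1; 2; 1; 2; 0; 3; 0; 2; 1; 3; 3; 3; 0; 0; 3; 3; 3; 3; 1; 2; 0; 0; 3; 0; 0; 2; 0; 3].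
Definition w3 : seq nat := [:: 0; 2; 1; 2; 1; 2; 2; 0; 0; 3; 0; 0; 3; 1; 1; 1; 3; 1; 1; 2; 0; 0; 2; 2; 2; 1; 3; 0; 3; 0; 3; 3; 0; 0; 2; 1; 3; 0; 0; 3; 0; 0; 3; 3; 3; 3; 1; 1; 1; 1; 2; 2; 1; 2; 1; 1; 2; 0; 3; 0; 3; 1; 1; 2; 0; 2; 2; 1; 3; 3; 3; 0; 0; 2; 1; 3; 1; 1; 3].
Definition w4 : seq nat := [:: 3; 1; 3; 0; 3; 3; 3; 1; 3; 3; 0; 2; 2; 1; 2; 2; 1; 1; 2; 2; 1; 1; 3; 0; 0; 3; 0; 3; 0; 0; 3; 3; 1; 1; 3; 0; 0; 3; 1; 3; 0; 2; 1; 1; 3; 0; 0; 2; 0; 0; 0; 0; 3; 3; 3; 0; 3; 3; 1; 1; 2; 2; 1; 2; 1; 3; 3; 0; 2; 0; 3; 0; 2; 1; 2; 1; 1; 2; 1].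
Lemma good0 : good 0 w0. Proof. by vm_compute. Qed.
Lemma good1 : good 1 w1. Proof. by vm_compute. Qed.
Lemma good2 : good 2 w2. Proof. by vm_compute. Qed.
Lemma good3 : good 3 w3. Proof. by vm_compute. Qed.
Lemma good4 : good 4 w4. Proof. by vm_compute. Qed.
Definition wsel (m : nat) : seq nat :=
  match m with 0 => w0 | 1 => w1 | 2 => w2 | 3 => w3 | _ => w4 end.
Lemma good_sel m : m < 5 -> good m (wsel m).
Proof.
case: m => [|[|[|[|[|m]]]]] h; [exact: good0|exact: good1|exact: good2|exact: good3|exact: good4|done].
Qed.

Local Open Scope group_scope.
Definition ee (gT : finGroupType) (x v : gT) (j : nat) : gT := v ^ (x ^+ j).
Definition NN (gT : finGroupType) (x v : gT) (c : code) : gT :=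
  let: (b0, b1, b2, b3, k) := c in
  ee x v 0 ^+ b0 * ee x v 1 ^+ b1 * ee x v 2 ^+ b2 * ee x v 3 ^+ b3 * x ^+ k.

Lemma NN_tx (gT : finGroupType) (x v : gT) (hx5 : x ^+ 5 = 1) c :
  NN x v (tx c) = NN x v c * x.
Proof.
case: c => [[[[b0 b1] b2] b3] k] /=.
by rewrite expg_mod // expgSr mulgA.
Qed.

Lemma NN_iter (gT : finGroupType) (x v : gT) (hx5 : x ^+ 5 = 1) n c :
  NN x v (iter n tx c) = NN x v c * x ^+ n.
Proof.
elim: n => [|n IH]; first by rewrite mulg1.
by rewrite iterS NN_tx // IH expgSr mulgA.
Qed.

Lemma flipX (gT : finGroupType) (e : gT) (b : bool) : e ^+ 2 = 1 ->
  e ^+ (~~ b) = e ^+ b * e.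
Proof. by case: b => /= h; rewrite ?mul1g // -expgSr h. Qed.

Lemma swapg (gT : finGroupType) (a b e : gT) : commute b e -> a * b * e = a * e * b.
Proof. by move=> h; rewrite -mulgA h mulgA. Qed.

Lemma conj_shift (gT : finGroupType) (x v : gT) j k : x ^+ (j + k) = 1 ->
  x ^+ k * v = ee x v j * x ^+ k.
Proof.
move=> h; have hi : (x ^+ j)^-1 = x ^+ k by apply/eqP; rewrite eq_invg_mul -expgD h.
by rewrite /ee conjgE hi -!mulgA -expgD h mulg1.
Qed.

Lemma flip_all (gT : finGroupType) (a0 a1 a2 a3 : gT) (b0 b1 b2 b3 : bool) :
  a0 ^+ 2 = 1 -> a1 ^+ 2 = 1 -> a2 ^+ 2 = 1 -> a3 ^+ 2 = 1 ->
  commute a0 a1 -> commute a0 a2 -> commute a0 a3 -> commute a1 a2 ->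
  commute a1 a3 -> commute a2 a3 ->
  a0 ^+ b0 * a1 ^+ b1 * a2 ^+ b2 * a3 ^+ b3 * (a0 * a1 * a2 * a3) =
  a0 ^+ (~~ b0) * a1 ^+ (~~ b1) * a2 ^+ (~~ b2) * a3 ^+ (~~ b3).
Proof.
move=> h0 h1 h2 h3 c01 c02 c03 c12 c13 c23.
have cX : forall (a c : gT) (b : bool), commute a c -> commute (a ^+ b) c.
  by move=> a c b h; apply: commute_sym; apply: commuteX; apply: commute_sym.
rewrite !mulgA !flipX //.
rewrite (swapg _ (cX _ _ b3 (commute_sym c03))) (swapg _ (cX _ _ b2 (commute_sym c02))).
rewrite (swapg _ (cX _ _ b1 (commute_sym c01))).
rewrite (swapg _ (cX _ _ b3 (commute_sym c13))) (swapg _ (cX _ _ b2 (commute_sym c12))).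
rewrite (swapg _ (cX _ _ b3 (commute_sym c23))). by rewrite !mulgA.
Qed.

Lemma NN_tv (gT : finGroupType) (x v : gT) (hx5 : x ^+ 5 = 1)
  (he2 : forall j, ee x v j ^+ 2 = 1)
  (hc : forall i j, commute (ee x v i) (ee x v j))
  (hrel : ee x v 4 = ee x v 0 * ee x v 1 * ee x v 2 * ee x v 3) c :
  NN x v (tv c) = NN x v c * v.
Proof.
have cX : forall i j (b : bool), commute (ee x v i ^+ b) (ee x v j).
  by move=> i j b; apply: commute_sym; apply: commuteX.
case: c => [[[[b0 b1] b2] b3] [[|[|[|[|[|k]]]]] Hk]] //=.
- rewrite -(mulgA _ (x ^+ 0%N) v) (@conj_shift _ x v 0%N 0%N); last by rewrite expg0.
  rewrite (mulgA _ (ee x v 0) (x ^+ 0%N)) !flipX //.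
  by rewrite (swapg _ (cX 3%N 0%N b3)) (swapg _ (cX 2%N 0%N b2)) (swapg _ (cX 1%N 0%N b1)).
- rewrite -(mulgA _ (x ^+ 1%N) v) (@conj_shift _ x v 4%N 1%N); last by rewrite hx5.
  by rewrite (mulgA _ (ee x v 4) (x ^+ 1%N)) hrel flip_all.
- rewrite -(mulgA _ (x ^+ 2%N) v) (@conj_shift _ x v 3%N 2%N); last by rewrite hx5.
  by rewrite (mulgA _ (ee x v 3) (x ^+ 2%N)) !flipX // (mulgA _ (ee x v 3 ^+ b3)).
- rewrite -(mulgA _ (x ^+ 3%N) v) (@conj_shift _ x v 2%N 3%N); last by rewrite hx5.
  rewrite (mulgA _ (ee x v 2) (x ^+ 3%N)) !flipX // (mulgA _ (ee x v 2 ^+ b2)).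
  by rewrite (swapg _ (cX 3%N 2%N b3)).
- rewrite -(mulgA _ (x ^+ 4%N) v) (@conj_shift _ x v 1%N 4%N); last by rewrite hx5.
  rewrite (mulgA _ (ee x v 1) (x ^+ 4%N)) !flipX // (mulgA _ (ee x v 1 ^+ b1)).
  by rewrite (swapg _ (cX 3%N 1%N b3)) (swapg _ (cX 2%N 1%N b2)).
Qed.

Lemma NN_ty (gT : finGroupType) (x v : gT) (hx5 : x ^+ 5 = 1)
  (he2 : forall j, ee x v j ^+ 2 = 1)
  (hc : forall i j, commute (ee x v i) (ee x v j))
  (hrel : ee x v 4 = ee x v 0 * ee x v 1 * ee x v 2 * ee x v 3) m c :
  NN x v (ty m c) = NN x v c * (v * x ^+ m).
Proof. by rewrite /ty NN_iter // NN_tv // mulgA. Qed.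

Lemma crel_adj (gT : finGroupType) (x v : gT) (hx5 : x ^+ 5 = 1)
  (he2 : forall j, ee x v j ^+ 2 = 1)
  (hc : forall i j, commute (ee x v i) (ee x v j))
  (hrel : ee x v 4 = ee x v 0 * ee x v 1 * ee x v 2 * ee x v 3) m
  (S : {set gT}) : x \in S -> v * x ^+ m \in S ->
  forall c d, crel m c d -> cayley_adj S (NN x v c) (NN x v d).
Proof.
move=> xS yS c d /or4P [] /eqP ->; rewrite /cayley_adj.
- by rewrite NN_tx // mulKg xS.
- by rewrite NN_tx // mulKg xS orbT.
- by rewrite NN_ty // mulKg yS.
- by rewrite NN_ty // mulKg yS orbT.
Qed.

Lemma NN_gen (gT : finGroupType) (x v : gT) (hx5 : x ^+ 5 = 1)
  (he2 : forall j, ee x v j ^+ 2 = 1)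
  (hc : forall i j, commute (ee x v i) (ee x v j))
  (hrel : ee x v 4 = ee x v 0 * ee x v 1 * ee x v 2 * ee x v 3) g :
  g \in <<[set x; v]>> -> g \in NN x v @: setT.
Proof.
move=> /gen_prodgP [n [f fA ->]].
elim: n f fA => [|n IH] f fA.
  rewrite big_ord0; apply/imsetP; exists c0 => //.
  by rewrite /NN /= !expg0 !mulg1.
rewrite big_ord_recr /=.
have /imsetP [c _ ->] := IH (fun i => f (widen_ord (leqnSn n) i)) (fun i => fA _).
case/set2P: (fA ord_max) => ->.
- by rewrite -NN_tx //; apply: imset_f.
- by rewrite -NN_tv //; apply: imset_f.
Qed.

Lemma card_code : #|[set: code]| = 80.
Proof. by rewrite cardsT !card_prod !card_bool card_ord. Qed.

Lemma NN_inj (gT : finGroupType) (x v : gT) (hx5 : x ^+ 5 = 1)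
  (he2 : forall j, ee x v j ^+ 2 = 1)
  (hc : forall i j, commute (ee x v i) (ee x v j))
  (hrel : ee x v 4 = ee x v 0 * ee x v 1 * ee x v 2 * ee x v 3)
  (hG : <<[set x; v]>> = [set: gT]) (hord : #|[set: gT]| = 80) :
  injective (NN x v).
Proof.
have /imset_injP inj : #|NN x v @: [set: code]| == #|[set: code]|.
  rewrite eqn_leq leq_imset_card card_code -hord subset_leq_card //.
  by apply/subsetP => g gG; apply: NN_gen => //; rewrite hG.
by move=> a b /inj; apply; rewrite inE.
Qed.

Lemma ham_from (gT : finGroupType) (x v : gT) (hx5 : x ^+ 5 = 1)
  (he2 : forall j, ee x v j ^+ 2 = 1)
  (hc : forall i j, commute (ee x v i) (ee x v j))
  (hrel : ee x v 4 = ee x v 0 * ee x v 1 * ee x v 2 * ee x v 3)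
  (hG : <<[set x; v]>> = [set: gT]) (hord : #|[set: gT]| = 80)
  (S : {set gT}) m : m < 5 -> x \in S -> v * x ^+ m \in S ->
  hamiltonian (cayley_adj S).
Proof.
move=> m5 xS yS; have /and3P [u sz cy] := good_sel m5.
exists (map (NN x v) (codes m (wsel m))).
apply/and3P; split.
- by rewrite (map_inj_uniq (NN_inj hx5 he2 hc hrel hG hord)).
- by rewrite size_map -cardsT hord.
- rewrite path.cycle_map; apply: path.sub_cycle cy => c d.
  exact: crel_adj.
Qed.


Lemma small_check (n : nat) (P : pred nat) : all P (iota 0 n) -> forall i, i < n -> P i.
Proof. by move=> /allP h i hi; apply: h; rewrite mem_iota. Qed.

Lemma nSyl5 (gT : finGroupType)
  (hord : #|[set: gT]| = 80%N)
  (hsyl : forall P : {group gT}, P \in 'Syl_5([set: gT]) -> ~~ (P <| [set: gT])) :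
  #|'Syl_5([set: gT])| = 16%N.
Proof.
have [X sylX] := Sylow_exists 5 [set: gT].
have cX : #|X| = 5%N by rewrite (card_Hall sylX) hord p_part.
have mod5 := card_Syl_mod [set: gT] (isT : prime 5).
rewrite (card_Syl sylX) in mod5 *.
set N := 'N_[set: gT](X) in mod5 *.
have sNG : N \subset [set: gT] := subsetIl _ _.
have sXN : X \subset N by rewrite subsetI subsetT normG.
have LN := Lagrange sNG.
have d5 : (5 %| #|N|)%N by rewrite -cX cardSg.
have ne1 : #|[set: gT] : N| != 1%N.
  apply/eqP => h; have eN := index1g sNG h.
  have XS : X \in 'Syl_5([set: gT]) by rewrite inE.
  apply: (negP (hsyl X XS)); rewrite /normal subsetT /=.
  by rewrite -eN subsetIr.
have d16 : (#|[set: gT] : N| %| 16)%N.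
  move: d5 LN; rewrite hord => /dvdnP [q ->].
  rewrite mulnAC => /eqP; rewrite -[80%N]/(16 * 5)%N eqn_pmul2r // => /eqP <-.
  exact: dvdn_mull.
have hi : #|[set: gT] : N| < 17 by rewrite ltnS dvdn_leq.
have := small_check (n := 17)
  (P := fun i => (i %| 16)%N ==> (i %% 5 == 1)%N ==> (i != 1)%N ==> (i == 16)%N) isT hi.
by rewrite d16 mod5 eqxx ne1 /= => /eqP.
Qed.

Lemma cardA (gT : finGroupType)
  (hord : #|[set: gT]| = 80%N)
  (hsyl : forall P : {group gT}, P \in 'Syl_5([set: gT]) -> ~~ (P <| [set: gT])) :
  #|[set g : gT | #[g] == 5%N]| = 64%N.
Proof.
have c5 : (#|[set: gT]|`_5 = 5)%N by rewrite hord p_part.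
rewrite -sum1_card (partition_big (fun g : gT => <[g]>%G)
   (fun Y : {group gT} => Y \in 'Syl_5([set: gT]))) /=; last first.
  by move=> g; rewrite !inE pHallE subsetT /= c5.
rewrite -[64%N]/(16 * 4)%N -(nSyl5 hord hsyl) -sum_nat_const.
apply: eq_bigr => Y; rewrite inE pHallE subsetT c5 /= => /eqP cY.
have c4 : #|Y :\ 1| = 4%N by move: cY; rewrite (cardsD1 1) group1 => -[].
rewrite -[RHS]c4 -sum1_card.
apply: eq_bigl => g; rewrite !inE.
apply/andP/andP => [[/eqP og /eqP eY] | [ng gY]].
  split; first by rewrite -order_eq1 og.
  by rewrite -eY /= cycle_id.
have og : #[g] = 5%N.
  apply/(prime_nt_dvdP (isT : prime 5)); first by rewrite order_eq1.
  by rewrite -cY order_dvdG.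
split; first by rewrite og.
apply/eqP; apply: group_inj => /=; apply/eqP.
by rewrite eqEcard cycle_subG gY /= cY -og leqnn.
Qed.

Lemma struct2 (gT : finGroupType)
  (hord : #|[set: gT]| = 80%N)
  (hsyl : forall P : {group gT}, P \in 'Syl_5([set: gT]) -> ~~ (P <| [set: gT])) :
  exists P : {group gT},
    [/\ P <| [set: gT], #|P| = 16%N & forall g, g \notin P -> #[g] = 5%N].
Proof.
have [P sylP] := Sylow_exists 2 [set: gT].
have cP : #|P| = 16%N by rewrite (card_Hall sylP) hord p_part.
set A := [set g : gT | #[g] == 5%N].
have nPA : forall g, g \in P -> #[g] != 5%N.
  move=> g gP; apply/eqP => og.
  by have := order_dvdG gP; rewrite og cP.
have dPA : P :&: A = set0.
  apply/setP => g; rewrite !inE; apply/andP => [[gP /eqP og]].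
  by move: (nPA g gP); rewrite og.
have uPA : P :|: A = [set: gT].
  by apply/eqP; rewrite eqEcard subsetT cardsU dPA cards0 cP cardA // hord.
have inP : forall g, #[g] != 5%N -> g \in P.
  move=> g ng; have : g \in P :|: A by rewrite uPA inE.
  by rewrite inE [g \in A]inE (negbTE ng) orbF.
exists P; split => //.
- apply/normalP; split; first exact: subsetT.
  move=> y _; apply/eqP; rewrite eqEcard cardJg leqnn andbT.
  apply/subsetP => z /imsetP [g gP ->]; apply: inP; rewrite orderJ.
  exact: nPA.
- by move=> g gP; apply/eqP; apply: contraR gP; apply: inP.
Qed.

Lemma rot5 (gT : finGroupType) (a0 a1 a2 a3 a4 : gT) :
  commute a0 (a1 * a2 * a3 * a4) -> a1 * a2 * a3 * a4 * a0 = a0 * a1 * a2 * a3 * a4.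
Proof. by move=> h; rewrite -h !mulgA. Qed.

Lemma conj_prod5 (gT : finGroupType) (a0 a1 a2 a3 a4 x : gT) :
  (a0 * a1 * a2 * a3 * a4) ^ x = a0 ^ x * a1 ^ x * a2 ^ x * a3 ^ x * a4 ^ x.
Proof. by rewrite !conjMg. Qed.

Lemma eeS (gT : finGroupType) (x v : gT) j : ee x v j ^ x = ee x v j.+1.
Proof. by rewrite /ee -conjgM -expgSr. Qed.

Unset Implicit Arguments.

Theorem mainTheorem7 (gT : finGroupType)
  (hord : #|[set: gT]| = 80%N)
  (hsyl : forall P : {group gT}, P \in 'Syl_5([set: gT]) -> ~~ (P <| [set: gT]))
  (S : {set gT}) (hgen : <<S>> = [set: gT]) :
  hamiltonian (cayley_adj S).
Proof.
have [P [nP cP out5]] := struct2 hord hsyl.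
have nPx : forall g, g \in 'N(P).
  by move=> g; apply: (subsetP (normal_norm nP)); rewrite inE.
have [x xS xP] : exists2 x, x \in S & x \notin P.
  have /subsetPn [x xS xP] : ~~ (S \subset P).
    apply/negP => sSP.
    have sGP : [set: gT] \subset P by rewrite -hgen gen_subG.
    by have := subset_leq_card sGP; rewrite hord cP.
  by exists x.
have ox := out5 x xP.
have hx5 : x ^+ 5 = 1 by rewrite -ox expg_order.
have cent1 : forall k, k \in P -> commute x k -> k = 1.
  move=> k kP ck.
  have xkP : x * k \notin P.
    by apply: contra xP => h; rewrite -(mulgK k x) groupM ?groupV.
  have k5 : k ^+ 5 = 1.
    have : (x * k) ^+ 5 = 1 by rewrite -(out5 _ xkP) expg_order.
    by rewrite expgMn // hx5 mul1g.
  have k16 : k ^+ 16 = 1 by rewrite -cP expg_cardG.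
  by move: k16; rewrite -[16%N]/(5 * 3 + 1)%N expgD expgM k5 expg1n mul1g expg1.
have inv : forall H : {group gT}, H \subset P -> x \in 'N(H) -> H :!=: 1 -> H :=: P.
  move=> H sHP nHx ntH.
  have p5 : 5.-group <[x]> by rewrite /pgroup -orderE ox.
  have acts : [acts <[x]>, on H | 'J] by rewrite astabsJ cycle_subG.
  have := pgroup_fix_mod p5 acts.
  have -> : 'Fix_(H | 'J)(<[x]>) = 1.
    apply/eqP; rewrite eqEsubset; apply/andP; split; last first.
      by rewrite sub1set inE group1 afixJ cent_cycle group1.
    apply/subsetP => k; rewrite inE afixJ cent_cycle => /andP [kH kC].
    rewrite inE; apply/eqP; apply: cent1; first exact: (subsetP sHP).
    by apply: commute_sym; apply/cent1P.
  rewrite cards1 => hmod.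
  have dH : (#|H| %| 16)%N by rewrite -cP cardSg.
  have n1 : #|H| != 1%N by rewrite -trivg_card1.
  have hi : #|H| < 17 by rewrite ltnS dvdn_leq.
  have := small_check (n := 17)
    (P := fun i => (i %| 16)%N ==> (i %% 5 == 1)%N ==> (i != 1)%N ==> (i == 16)%N) isT hi.
  rewrite dH hmod eqxx n1 /= => /eqP cH.
  by apply/eqP; rewrite eqEcard sHP cP cH.
have pP : 2.-group P by rewrite /pgroup cP.
have ntP : P :!=: 1 by rewrite trivg_card1 cP.
have abP : abelian P.
  apply/center_idP; apply: (inv 'Z(P)%G) => /=.
  - exact: center_sub.
  - by apply: (subsetP (char_norm_trans (center_char P) (normal_norm nP))); rewrite inE.
  - by rewrite center_nil_eq1 ?(pgroup_nil pP).
have P2 : forall k, k \in P -> k ^+ 2 = 1.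
  have eO : 'Ohm_1(P) = P.
    apply: (inv 'Ohm_1(P)%G) => /=.
    - exact: Ohm_sub.
    - by apply: (subsetP (char_norm_trans (Ohm_char 1 P) (normal_norm nP))); rewrite inE.
    - by rewrite Ohm1_eq1.
  have := Ohm1_abelem pP abP; rewrite eO => /(abelemP (isT : prime 2)) [_].
  exact.
have [y yS yX] : exists2 y, y \in S & y \notin <[x]>.
  have /subsetPn [y yS yX] : ~~ (S \subset <[x]>).
    apply/negP => sSX.
    have sGX : [set: gT] \subset <[x]> by rewrite -hgen gen_subG.
    by have := subset_leq_card sGX; rewrite hord -orderE ox.
  by exists y.
have GPX : P * <[x]> = [set: gT].
  apply/eqP; rewrite eqEcard subsetT /= hord TI_cardMg ?cP -?orderE ?ox //.
  by rewrite coprime_TIg // cP -orderE ox.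
have : y \in P * <[x]> by rewrite GPX inE.
case/mulsgP => v w vP /cycleP [i ->] ey.
set m := (i %% 5)%N.
have hm : x ^+ i = x ^+ m by rewrite /m expg_mod.
have v1 : v != 1.
  apply: contra yX => /eqP v1; rewrite ey v1 mul1g; exact: mem_cycle.
have eP : forall j, ee x v j \in P by move=> j; rewrite /ee memJ_norm.
have he2 : forall j, ee x v j ^+ 2 = 1.
  by move=> j; rewrite /ee -conjXg P2 // conj1g.
have hc : forall i j, commute (ee x v i) (ee x v j).
  by move=> i' j'; apply: (centsP abP) => //; apply: eP.
have e0 : ee x v 0 = v by rewrite /ee expg0 conjg1.
have e5 : ee x v 5 = ee x v 0 by rewrite /ee hx5.
set q := ee x v 0 * ee x v 1 * ee x v 2 * ee x v 3.
have qP : q \in P by rewrite /q groupM ?eP // groupM ?eP // groupM ?eP.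
have hrel : ee x v 4 = q.
  have wx : (q * ee x v 4) ^ x = q * ee x v 4.
    rewrite /q conj_prod5 !eeS e5 (@rot5 _ (ee x v 0)) //.
    apply: (centsP abP); first exact: eP.
    by rewrite groupM ?eP // groupM ?eP // groupM ?eP.
  have w1 : q * ee x v 4 = 1.
    apply: cent1; first by rewrite groupM.
    by rewrite /commute (conjgC (q * ee x v 4) x) wx.
  have q2 : q * q = 1 by rewrite -{2}(expg1 q) -expgS P2.
  apply/eqP; rewrite -(mulKg q (ee x v 4)) w1 mulg1.
  by rewrite eq_invg_mul q2.
have hG : <<[set x; v]>> = [set: gT].
  set H := <<[set x; v]>>%G.
  have xH : x \in H by rewrite mem_gen // !inE eqxx.
  have vH : v \in H by rewrite mem_gen // !inE eqxx orbT.
  have eHP : (H :&: P)%G :=: P.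
    apply: inv => /=.
    - exact: subsetIr.
    - have : <[x]> \subset 'N(H :&: P).
        by rewrite normsI // cycle_subG ?nPx // (subsetP (normG H)).
      by rewrite cycle_subG.
    - by apply/trivgPn; exists v; rewrite // inE vH.
  have PH : P \subset H by rewrite -eHP subsetIl.
  by apply/eqP; rewrite eqEsubset subsetT /= -GPX mul_subG // cycle_subG.
have ym : v * x ^+ m \in S by rewrite -hm -ey.
exact: (ham_from hx5 he2 hc hrel hG hord (ltn_pmod i (isT : 0 < 5)) xS ym).
Qed.
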